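(* For every discrete group $G$ and every normalized 2-cocycle $\sigma$ on $G$, $M_0A(G,\sigma)=M_0A(G)$, and for $\varphi$ in this set the cb-norm $\|M_\varphi\|_{cb}$ computed on $C^*_r(G,\sigma)$ does not depend on $\sigma$. More precisely, for $\varphi:G\to\mathbb{C}$, one has $\varphi\in M_0A(G,\sigma)$ if and only if the kernel $K_\varphi(s,t)=\varphi(st^{-1})$ is a Schur multiplier on $B(\ell^2(G))$, and then $\|M_\varphi\|_{cb}=\|S_{K_\varphi}\|$.
   Context: $\sigma:G\times G\to\mathbb{T}$ is a normalized 2-cocycle ($\sigma(g,h)\sigma(gh,k)=\sigma(h,k)\sigma(g,hk)$, $\sigma(g,e)=\sigma(e,g)=1$); $\Lambda_\sigma(g)$ is the unitary on $\ell^2(G)$ with $(\Lambda_\sigma(g)\xi)(h)=\sigma(g,g^{-1}h)\xi(g^{-1}h)$; $C^*_r(G,\sigma)$ is the operator-norm closure of $\mathbb{C}(G,\sigma)=\mathrm{span}\,\Lambda_\sigma(G)$. For $\varphi:G\to\mathbb{C}$, $M_\varphi:\mathbb{C}(G,\sigma)\to\mathbb{C}(G,\sigma)$ is the linear map with $M_\varphi(\Lambda_\sigma(g))=\varphi(g)\Lambda_\sigma(g)$; $\varphi\in MA(G,\sigma)$ (a $\sigma$-multiplier) if $M_\varphi$ is bounded in operator norm, in which case $M_\varphi$ also denotes its extension to $C^*_r(G,\sigma)$. $M_0A(G,\sigma)$ is the set of $\varphi\in MA(G,\sigma)$ with $M_\varphi$ completely bounded, with norm $\|\varphi\|_{cb}=\|M_\varphi\|_{cb}$;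 $M_0A(G)=M_0A(G,1)$. A kernel $K:G\times G\to\mathbb{C}$ is a Schur multiplier if for every $A\in B(\ell^2(G))$ with matrix $[A(s,t)]$ in the canonical basis, $[K(s,t)A(s,t)]$ is the matrix of a bounded operator $S_K(A)$; $S_K$ is then a bounded map on $B(\ell^2(G))$. *)

(* Defs.v *)
From mathcomp Require Import all_boot all_order all_algebra.
From mathcomp Require Import complex.
From mathcomp Require Import classical_sets reals constructive_ereal ereal.
Set Implicit Arguments. Unset Strict Implicit. Unset Printing Implicit Defensive.
Import Order.TTheory GRing.Theory Num.Theory.
Local Open Scope ring_scope.
Local Open Scope complex_scope.

Section TwistedMultipliers.
Variable R : realType.
Local Notation C := R[i].

Definition is_group (G : eqType) (mul : G -> G -> G) (inv : G -> G) (e : G) :=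
  [/\ forall x y z, mul x (mul y z) = mul (mul x y) z,
      forall x, mul e x = x, forall x, mul x e = x,
      forall x, mul (inv x) x = e & forall x, mul x (inv x) = e].

Variables (G : eqType) (mul : G -> G -> G) (inv : G -> G) (e : G).

Definition is_norm_cocycle (sigma : G -> G -> C) :=
  [/\ forall g h, `|sigma g h| = 1,
      forall g h k, sigma g h * sigma (mul g h) k = sigma h k * sigma g (mul h k),
      forall g, sigma g e = 1 & forall g, sigma e g = 1].

Definition trivial_cocycle : G -> G -> C := fun _ _ => 1.

(* Matrix of Lambda_sigma(g) in the canonical basis of l^2(G):
   <Lambda_sigma(g) delta_t, delta_s> = sigma(g,t) if s = g t, else 0. *)
Definition lam_entry (sigma : G -> G -> C) (g s t : G) : C :=
  if s == mul g t then sigma g t else 0.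

(* An element of C(G,sigma) given as a finite linear combination
   sum_p p.1 Lambda_sigma(p.2). *)
Definition tgelt := seq (C * G).

Definition tg_entry (sigma : G -> G -> C) (x : tgelt) (s t : G) : C :=
  \sum_(p <- x) p.1 * lam_entry sigma p.2 s t.

Definition Mphi (phi : G -> C) (x : tgelt) : tgelt :=
  [seq (phi p.2 * p.1, p.2) | p <- x].

(* An n x n block matrix of G x G matrices, i.e. a matrix indexed by
   ('I_n x G), is (the matrix of) an operator on l^2(G)^n of norm <= c:
   tested against all finitely supported vectors. *)
Definition mx_bounded_by (n : nat) (A : 'I_n -> 'I_n -> G -> G -> C) (c : R) :=
  forall (S : seq G), uniq S -> forall xi eta : 'I_n -> G -> C,
    `| \sum_(i < n) \sum_(j < n) \sum_(s <- S) \sum_(t <- S)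
         eta i s * A i j s t * xi j t | ^+ 2
    <= (c ^+ 2)%:C * (\sum_(j < n) \sum_(t <- S) `|xi j t| ^+ 2)
                   * (\sum_(i < n) \sum_(s <- S) `|eta i s| ^+ 2).

Definition bounded_by (A : G -> G -> C) (c : R) :=
  forall (S : seq G), uniq S -> forall xi eta : G -> C,
    `| \sum_(s <- S) \sum_(t <- S) eta s * A s t * xi t | ^+ 2
    <= (c ^+ 2)%:C * (\sum_(t <- S) `|xi t| ^+ 2) * (\sum_(s <- S) `|eta s| ^+ 2).

Definition MA (sigma : G -> G -> C) (phi : G -> C) :=
  exists c : R, forall (x : tgelt) (d : R),
    bounded_by (tg_entry sigma x) d -> bounded_by (tg_entry sigma (Mphi phi x)) (c * d).

Definition cb_bound (sigma : G -> G -> C) (phi : G -> C) (c : R) :=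
  0 <= c /\
  forall (n : nat) (X : 'I_n -> 'I_n -> tgelt) (d : R),
    mx_bounded_by (fun i j => tg_entry sigma (X i j)) d ->
    mx_bounded_by (fun i j => tg_entry sigma (Mphi phi (X i j))) (c * d).

Definition M0A (sigma : G -> G -> C) (phi : G -> C) :=
  MA sigma phi /\ exists c, cb_bound sigma phi c.

Definition cb_norm (sigma : G -> G -> C) (phi : G -> C) : \bar R :=
  ereal_inf [set (c%:E)%E | c in cb_bound sigma phi].

Definition schur_mult (K : G -> G -> C) (A : G -> G -> C) : G -> G -> C :=
  fun s t => K s t * A s t.

Definition schur_bound (K : G -> G -> C) (c : R) :=
  0 <= c /\ forall (A : G -> G -> C) (d : R),
    bounded_by A d -> bounded_by (schur_mult K A) (c * d).

Definition is_schur_multiplier (K : G -> G -> C) := exists c, schur_bound K c.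

Definition schur_norm (K : G -> G -> C) : \bar R :=
  ereal_inf [set (c%:E)%E | c in schur_bound K].

Definition K_of (phi : G -> C) : G -> G -> C := fun s t => phi (mul s (inv t)).

End TwistedMultipliers.

(* Main.v *)
Require Import Defs.
From mathcomp Require Import all_boot all_order all_algebra.
From mathcomp Require Import complex.
From mathcomp Require Import boolp classical_sets reals constructive_ereal ereal.
From mathcomp Require Import ring lra.
Import Order.TTheory GRing.Theory Num.Theory.
Local Open Scope complex_scope.
Local Open Scope ring_scope.

Section PA.
Variable R : realType.
Local Notation C := R[i].
Variable G : eqType.

Lemma sum4 (I J U V : Type) (rI : seq I) (rJ : seq J) (rU : seq U) (rV : seq V)
  (F : U -> V -> I -> J -> C) :
  \sum_(s <- rU) \sum_(t <- rV) \sum_(i <- rI) \sum_(j <- rJ) F s t i j =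
  \sum_(i <- rI) \sum_(j <- rJ) \sum_(s <- rU) \sum_(t <- rV) F s t i j.
Proof.
under eq_bigr => s _ do rewrite exchange_big /=.
under eq_bigr => s _ do under eq_bigr => i _ do rewrite exchange_big /=.
rewrite exchange_big /=; apply: eq_bigr => i _; by rewrite exchange_big.
Qed.

Lemma sqr_ge0C (d : R) : 0 <= (d ^+ 2)%:C :> C.
Proof. by rewrite ler0c sqr_ge0. Qed.

Lemma nsq_ge0 (x : C) : 0 <= `|x| ^+ 2.
Proof. by rewrite exprn_ge0. Qed.

Lemma sqrt_sum_ge0 n (f : 'I_n -> C) : 0 <= sqrtC (\sum_(i < n) `|f i| ^+ 2).
Proof. by rewrite sqrtC_ge0 sumr_ge0 // => i _; apply: nsq_ge0. Qed.

Lemma sqrt_sum_norm n (f : 'I_n -> C) :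
  `|sqrtC (\sum_(i < n) `|f i| ^+ 2)| ^+ 2 = \sum_(i < n) `|f i| ^+ 2.
Proof. by rewrite ger0_norm ?sqrt_sum_ge0 // sqrtCK. Qed.

Lemma sqrt_sum_cancel n (f : 'I_n -> C) i :
  sqrtC (\sum_(i < n) `|f i| ^+ 2) * (sqrtC (\sum_(i < n) `|f i| ^+ 2))^-1 * f i = f i.
Proof.
have [/eqP z|nz] := eqVneq (sqrtC (\sum_(i < n) `|f i| ^+ 2)) 0.
  move: (z); rewrite sqrtC_eq0 => /eqP z2.
  have : `|f i| ^+ 2 = 0 by apply: (psumr_eq0P _ z2) => // j _; apply: nsq_ge0.
  by move/eqP; rewrite expf_eq0 /= normr_eq0 => /eqP ->; rewrite mulr0.
by rewrite mulfV // mul1r.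
Qed.

Lemma sum_ratio_le n (f : 'I_n -> C) (v : C) :
  \sum_(j < n) `|v * f j / sqrtC (\sum_(i < n) `|f i| ^+ 2)| ^+ 2 <= `|v| ^+ 2.
Proof.
set r := sqrtC _.
have -> : \sum_(j < n) `|v * f j / r| ^+ 2 = `|v| ^+ 2 * ((\sum_(j < n) `|f j| ^+ 2) / `|r| ^+ 2).
  rewrite mulr_suml mulr_sumr; apply: eq_bigr => j _.
  by rewrite !normrM normfV !exprMn exprVn mulrA.
rewrite /r sqrt_sum_norm.
have [->|nz] := eqVneq (\sum_(j < n) `|f j| ^+ 2) 0.
  by rewrite mul0r mulr0 nsq_ge0.
by rewrite mulfV // mulr1.
Qed.

Lemma partA (K : G -> G -> C) c : schur_bound K c ->
  forall n (T : 'I_n -> 'I_n -> G -> G -> C) d, mx_bounded_by T d ->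
  mx_bounded_by (fun i j s t => K s t * T i j s t) (c * d).
Proof.
move=> [c0 HK] n T d HT S uS xi eta.
pose x0 := fun t => sqrtC (\sum_(j < n) `|xi j t| ^+ 2).
pose y0 := fun s => sqrtC (\sum_(i < n) `|eta i s| ^+ 2).
pose A := fun s t => \sum_(i < n) \sum_(j < n) eta i s * T i j s t * xi j t / (y0 s * x0 t).
have HA : bounded_by A d.
  move=> S' uS' v u.
  have H := HT S' uS' (fun j t => v t * xi j t / x0 t) (fun i s => u s * eta i s / y0 s).
  have E : \sum_(s <- S') \sum_(t <- S') u s * A s t * v t =
    \sum_(i < n) \sum_(j < n) \sum_(s <- S') \sum_(t <- S')
      (u s * eta i s / y0 s) * T i j s t * (v t * xi j t / x0 t).
    rewrite -sum4; apply: eq_bigr => s _; apply: eq_bigr => t _.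
    rewrite /A mulr_sumr mulr_suml; apply: eq_bigr => i _.
    rewrite mulr_sumr mulr_suml; apply: eq_bigr => j _.
    rewrite invfM; ring.
  rewrite E; apply: (le_trans H).
  have P1 : 0 <= \sum_(j < n) \sum_(t <- S') `|v t * xi j t / x0 t| ^+ 2.
    by do 2 (apply: sumr_ge0 => ? _); apply: nsq_ge0.
  have P2 : 0 <= \sum_(i < n) \sum_(s <- S') `|u s * eta i s / y0 s| ^+ 2.
    by do 2 (apply: sumr_ge0 => ? _); apply: nsq_ge0.
  apply: ler_pM => //.
  - by apply: mulr_ge0 => //; apply: sqr_ge0C.
  - apply: ler_wpM2l; first exact: sqr_ge0C.
    rewrite exchange_big /=; apply: ler_sum => t _; exact: sum_ratio_le.
  - rewrite exchange_big /=; apply: ler_sum => s _; exact: sum_ratio_le.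
have := HK A d HA S uS x0 y0.
have E : \sum_(s <- S) \sum_(t <- S) y0 s * schur_mult K A s t * x0 t =
   \sum_(i < n) \sum_(j < n) \sum_(s <- S) \sum_(t <- S)
      eta i s * (K s t * T i j s t) * xi j t.
  rewrite -sum4; apply: eq_bigr => s _; apply: eq_bigr => t _.
  rewrite /schur_mult /A mulr_sumr mulr_sumr mulr_suml; apply: eq_bigr => i _.
  rewrite mulr_sumr mulr_sumr mulr_suml; apply: eq_bigr => j _.
  have h1 := sqrt_sum_cancel n (fun k => eta k s) i.
  have h2 := sqrt_sum_cancel n (fun k => xi k t) j.
  rewrite /= in h1 h2.
  rewrite -{2}h1 -{2}h2 /x0 /y0 invfM; ring.
have E1 : \sum_(t <- S) `|x0 t| ^+ 2 = \sum_(j < n) \sum_(t <- S) `|xi j t| ^+ 2.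
  by rewrite exchange_big /=; apply: eq_bigr => t _; rewrite sqrt_sum_norm.
have E2 : \sum_(s <- S) `|y0 s| ^+ 2 = \sum_(i < n) \sum_(s <- S) `|eta i s| ^+ 2.
  by rewrite exchange_big /=; apply: eq_bigr => t _; rewrite sqrt_sum_norm.
by rewrite E E1 E2.
Qed.
End PA.

Section Gen.
Variable R : realType.
Local Notation C := R[i].

Lemma CSR (I : Type) (W : seq I) (a p q : I -> R) (D : R) :
  0 <= D -> (forall w, [/\ 0 <= a w, 0 <= p w & 0 <= q w]) ->
  (forall w, a w ^+ 2 <= D * p w * q w) ->
  (\sum_(w <- W) a w) ^+ 2 <= D * (\sum_(w <- W) p w) * (\sum_(w <- W) q w).
Proof.
move=> D0 hpos hb; elim: W => [|w W IH]; first by rewrite !big_nil expr0n /= mulr0.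
rewrite !big_cons.
set A := \sum_(w <- W) a w in IH *; set P := \sum_(w <- W) p w in IH *;
set Q := \sum_(w <- W) q w in IH *.
have [a0 p0 q0] := hpos w.
have A0 : 0 <= A by apply: sumr_ge0 => i _; case: (hpos i).
have P0 : 0 <= P by apply: sumr_ge0 => i _; case: (hpos i).
have Q0 : 0 <= Q by apply: sumr_ge0 => i _; case: (hpos i).
have h := hb w.
have k1 : (a w * A) ^+ 2 <= (D * p w * q w) * (D * P * Q).
  by rewrite exprMn; apply: ler_pM; rewrite ?sqr_ge0.
have k2 : 4 * ((D * p w * q w) * (D * P * Q)) <= (D * (p w * Q + P * q w)) ^+ 2.
  have : 0 <= D ^+ 2 * (p w * Q - P * q w) ^+ 2 by rewrite mulr_ge0 ?sqr_ge0.
  move=> hh; rewrite -subr_ge0; apply: le_trans hh _; rewrite le_eqVlt; apply/orP; left; apply/eqP; ring.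
have k3 : 2 * (a w * A) <= D * (p w * Q + P * q w).
  have r0 : 0 <= D * (p w * Q + P * q w) by rewrite mulr_ge0 // addr_ge0 // mulr_ge0.
  have l0 : 0 <= 2 * (a w * A) by rewrite mulr_ge0 // mulr_ge0.
  rewrite -(ler_pXn2r (_ : (0 < 2)%N)) ?nnegrE //.
  apply: le_trans k2; rewrite exprMn; nra.
nra.
Qed.

Lemma CSC (I : Type) (W : seq I) (z P Q : I -> C) (D : R) :
  0 <= D -> (forall w, 0 <= P w /\ 0 <= Q w) ->
  (forall w, `|z w| ^+ 2 <= D%:C * P w * Q w) ->
  `|\sum_(w <- W) z w| ^+ 2 <= D%:C * (\sum_(w <- W) P w) * (\sum_(w <- W) Q w).
Proof.
move=> D0 hpos hb.
pose a w := complex.Re `|z w|; pose p w := complex.Re (P w); pose q w := complex.Re (Q w).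
have ReE (x : C) : 0 <= x -> (complex.Re x)%:C = x by move=> h; rewrite RRe_real // ger0_real.
have aE w : (a w)%:C = `|z w| by rewrite ReE.
have pE w : (p w)%:C = P w by rewrite ReE //; case: (hpos w).
have qE w : (q w)%:C = Q w by rewrite ReE //; case: (hpos w).
have := @CSR I W a p q D D0.
have hp : forall w, [/\ 0 <= a w, 0 <= p w & 0 <= q w].
  move=> w; case: (hpos w); rewrite -pE -qE !ler0c => -> ->.
  by have := normr_ge0 (z w); rewrite -aE ler0c => ->.
have hb' : forall w, a w ^+ 2 <= D * p w * q w.
  move=> w; have := hb w; rewrite -aE -pE -qE -rmorphXn -!rmorphM lecR //.
move=> /(_ hp hb') H.
have SE : (\sum_(w <- W) a w)%:C = \sum_(w <- W) `|z w|.
  by rewrite rmorph_sum; apply: eq_bigr => w _; exact: aE.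
apply: (@le_trans _ _ ((\sum_(w <- W) `|z w|) ^+ 2)).
  rewrite lerXn2r ?nnegrE ?normr_ge0 ?ler_norm_sum //.
  by apply: sumr_ge0 => w _.
rewrite -SE -rmorphXn; apply: (le_trans (_ : _ <= (D * (\sum_(w <- W) p w) * (\sum_(w <- W) q w))%:C)).
  by rewrite lecR.
rewrite !rmorphM !rmorph_sum.
by rewrite le_eqVlt; apply/orP; left; apply/eqP; congr (_ * _ * _); apply: eq_bigr => w _; [exact: pE|exact: qE].
Qed.

End Gen.

Section Grp.
Variable R : realType.
Local Notation C := R[i].
Variables (G : eqType) (mul : G -> G -> G) (inv : G -> G) (e : G).
Hypothesis HG : is_group mul inv e.

Lemma mulA x y z : mul x (mul y z) = mul (mul x y) z. Proof. by case: HG. Qed.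
Lemma mul1g x : mul e x = x. Proof. by case: HG. Qed.
Lemma mulg1 x : mul x e = x. Proof. by case: HG. Qed.
Lemma mulVg x : mul (inv x) x = e. Proof. by case: HG. Qed.
Lemma mulgV x : mul x (inv x) = e. Proof. by case: HG. Qed.
Lemma mulKg a x : mul (inv a) (mul a x) = x. Proof. by rewrite mulA mulVg mul1g. Qed.
Lemma mulKVg a x : mul a (mul (inv a) x) = x. Proof. by rewrite mulA mulgV mul1g. Qed.
Lemma mul_inj a : injective (mul a).
Proof. by move=> x y h; rewrite -(mulKg a x) h mulKg. Qed.

Lemma eq_mulE s g t : (s == mul g t) = (g == mul s (inv t)).
Proof.
apply/eqP/eqP => ->; first by rewrite -mulA mulgV mulg1.
by rewrite -mulA mulVg mulg1.
Qed.

Lemma L0 (sigma : G -> G -> C) phi x s t :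
  tg_entry mul sigma (Mphi phi x) s t = K_of mul inv phi s t * tg_entry mul sigma x s t.
Proof.
rewrite /tg_entry /Mphi big_map mulr_sumr; apply: eq_bigr => p _ /=.
rewrite /lam_entry; case: ifP => h; last by rewrite !mulr0.
by move: h; rewrite eq_mulE /K_of => /eqP <-; ring.
Qed.

Lemma sum_pick (S : seq G) (a : G) (F : G -> C) : uniq S ->
  \sum_(u <- S) (if u == a then F u else 0) = if a \in S then F a else 0.
Proof.
move=> uS; case: ifP => aS.
  rewrite (big_rem a) //= eqxx big1_seq ?addr0 // => u /andP[_ uin].
  by case: eqP uin => // ->; rewrite mem_rem_uniqF.
by rewrite big1_seq // => u /andP[_ uin]; case: eqP uin => // ->; rewrite aS.
Qed.

Lemma reindex (S W : seq G) (a : G) (F : G -> C) : uniq S -> uniq W ->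
  (forall v, v \in S -> mul (inv a) v \in W) ->
  \sum_(v <- S) F v = \sum_(w <- W) (if mul a w \in S then F (mul a w) else 0).
Proof.
move=> uS uW hW.
rewrite -[RHS]big_mkcond /= -[RHS]big_filter.
rewrite (_ : \sum_(i <- [seq x <- W | mul a x \in S]) F (mul a i) =
   \sum_(v <- [seq mul a x | x <- [seq x <- W | mul a x \in S]]) F v); last by rewrite big_map.
apply: perm_big; apply: uniq_perm => //.
  by rewrite map_inj_uniq ?filter_uniq //; apply: mul_inj.
move=> v; apply/idP/mapP => [vS|[w]].
  by exists (mul (inv a) v); rewrite ?mem_filter ?mulKVg ?vS ?hW.
by rewrite mem_filter => /andP[h _] ->.
Qed.

Lemma sum_ord (S : seq G) (F : G -> C) :
  \sum_(s <- S) F s = \sum_(i < size S) F (nth e S i).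
Proof. by rewrite (big_nth e) big_mkord. Qed.

Lemma idx_bound (A : G -> G -> C) d (S : seq G) : bounded_by A d -> uniq S ->
  forall x y : 'I_(size S) -> C,
  `|\sum_(i < size S) \sum_(j < size S) y i * A (nth e S i) (nth e S j) * x j| ^+ 2
  <= (d ^+ 2)%:C * (\sum_(j < size S) `|x j| ^+ 2) * (\sum_(i < size S) `|y i| ^+ 2).
Proof.
move=> HA uS x y.
pose x' s := oapp x 0 (insub (index s S) : option 'I_(size S)).
pose y' s := oapp y 0 (insub (index s S) : option 'I_(size S)).
have xE (i : 'I_(size S)) : x' (nth e S i) = x i.
  by rewrite /x' index_uniq // valK.
have yE (i : 'I_(size S)) : y' (nth e S i) = y i.
  by rewrite /y' index_uniq // valK.
have := HA S uS x' y'.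
rewrite !sum_ord.
under eq_bigr => i _ do rewrite sum_ord.
have E1 : \sum_(j < size S) `|x' (nth e S j)| ^+ 2 = \sum_(j < size S) `|x j| ^+ 2.
  by apply: eq_bigr => j _; rewrite xE.
have E2 : \sum_(j < size S) `|y' (nth e S j)| ^+ 2 = \sum_(j < size S) `|y j| ^+ 2.
  by apply: eq_bigr => j _; rewrite yE.
have E3 : \sum_(i < size S) \sum_(j < size S) y' (nth e S i) * A (nth e S i) (nth e S j) * x' (nth e S j)
  = \sum_(i < size S) \sum_(j < size S) y i * A (nth e S i) (nth e S j) * x j.
  by apply: eq_bigr => i _; apply: eq_bigr => j _; rewrite xE yE.
by rewrite E1 E2 E3.
Qed.


Lemma sum_pick2 (S : seq G) (a b : G) (F : G -> G -> C) : uniq S -> a \in S -> b \in S ->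
  \sum_(u <- S) \sum_(v <- S) (if u == a then (if v == b then F u v else 0) else 0) = F a b.
Proof.
move=> uS aS bS.
rewrite (eq_bigr (fun u => if u == a then \sum_(v <- S) (if v == b then F u v else 0) else 0)); last first.
  by move=> u _; case: eqP => _ //; rewrite big1.
by rewrite sum_pick // aS sum_pick // bS.
Qed.

Lemma coc (sigma : G -> G -> C) : is_norm_cocycle mul e sigma -> forall si sj w,
  (sigma (mul si (inv sj)) sj)^* * sigma (mul si (inv sj)) (mul sj w) = sigma si w * (sigma sj w)^*.
Proof.
case=> H1 H2 _ _ si sj w.
set g := mul si (inv sj).
have u x y : sigma x y * (sigma x y)^* = 1 by rewrite -normCK H1 expr1n.
have hc := H2 g sj w.
have gs : mul g sj = si by rewrite /g -mulA mulVg mulg1.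
rewrite gs in hc.
rewrite -[LHS]mulr1 -(u sj w).
transitivity ((sigma g sj)^* * (sigma sj w * sigma g (mul sj w)) * (sigma sj w)^*); first by ring.
rewrite -hc.
transitivity ((sigma g sj * (sigma g sj)^*) * sigma si w * (sigma sj w)^*); first by ring.
by rewrite u mul1r.
Qed.

Lemma partB (sigma : G -> G -> C) phi c : is_norm_cocycle mul e sigma ->
  cb_bound mul sigma phi c -> schur_bound (K_of mul inv phi) c.
Proof.
move=> Hs [c0 Hc]; split=> // A d HA S uS xi eta.
have [H1 _ _ _] := Hs.
have uu x y : sigma x y * (sigma x y)^* = 1 by rewrite -normCK H1 expr1n.
pose n := size S.
pose s_ (i : 'I_n) := nth e S i.
pose g i j := mul (s_ i) (inv (s_ j)).
pose X : 'I_n -> 'I_n -> tgelt R G := fun i j =>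
  [:: (A (s_ i) (s_ j) * (sigma (g i j) (s_ j))^*, g i j)].
have tgX i j u v : tg_entry mul sigma (X i j) u v = A (s_ i) (s_ j) * (sigma (g i j) (s_ j))^*
   * (if u == mul (g i j) v then sigma (g i j) v else 0).
  by rewrite /tg_entry big_cons big_nil addr0.
have sS (i : 'I_n) : s_ i \in S by apply: mem_nth.
have gsw i j w : mul (g i j) (mul (s_ j) w) = mul (s_ i) w by rewrite /g -mulA mulKg.
have HX : mx_bounded_by (fun i j => tg_entry mul sigma (X i j)) d.
  move=> S' uS' xi' eta'.
  pose W := undup (flatten [seq [seq mul (inv (s_ j)) v | v <- S'] | j <- enum 'I_n]).
  have uW : uniq W := undup_uniq _.
  have inW (j : 'I_n) v : v \in S' -> mul (inv (s_ j)) v \in W.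
    move=> vS; rewrite mem_undup; apply/flattenP.
    exists [seq mul (inv (s_ j)) v | v <- S']; last by apply: map_f.
    by apply/mapP; exists j; rewrite ?mem_enum.
  pose bw w (i : 'I_n) := if mul (s_ i) w \in S' then sigma (s_ i) w * eta' i (mul (s_ i) w) else 0.
  pose aw w (j : 'I_n) := if mul (s_ j) w \in S' then (sigma (s_ j) w)^* * xi' j (mul (s_ j) w) else 0.
  have E : \sum_(i < n) \sum_(j < n) \sum_(u <- S') \sum_(v <- S')
        eta' i u * tg_entry mul sigma (X i j) u v * xi' j v
      = \sum_(w <- W) \sum_(i < n) \sum_(j < n) bw w i * A (s_ i) (s_ j) * aw w j.
    transitivity (\sum_(i < n) \sum_(j < n) \sum_(w <- W) bw w i * A (s_ i) (s_ j) * aw w j); last first.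
      under eq_bigr => i _ do rewrite exchange_big /=.
      by rewrite exchange_big.
    apply: eq_bigr => i _; apply: eq_bigr => j _.
    rewrite exchange_big /=.
    transitivity (\sum_(v <- S') (if mul (g i j) v \in S' then
        eta' i (mul (g i j) v) * (A (s_ i) (s_ j) * (sigma (g i j) (s_ j))^*) * sigma (g i j) v * xi' j v
        else 0)).
      apply: eq_bigr => v _.
      transitivity (\sum_(u' <- S') (if u' == mul (g i j) v then
        eta' i u' * (A (s_ i) (s_ j) * (sigma (g i j) (s_ j))^*) * sigma (g i j) v * xi' j v else 0)).
        apply: eq_bigr => u' _; rewrite tgX; case: eqP => [->|_]; rewrite ?mulr0 ?mul0r //; ring.
      by rewrite sum_pick.
    rewrite (reindex _ _ (s_ j) _ uS' uW (inW j)).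
    apply: eq_bigr => w _; rewrite gsw /bw /aw.
    case: (mul (s_ j) w \in S'); case: (mul (s_ i) w \in S'); rewrite ?mulr0 ?mul0r //.
    transitivity (eta' i (mul (s_ i) w) * A (s_ i) (s_ j) *
      ((sigma (g i j) (s_ j))^* * sigma (g i j) (mul (s_ j) w)) * xi' j (mul (s_ j) w)); first by ring.
    rewrite /g coc //; ring.
  rewrite E.
  have EP : \sum_(w <- W) \sum_(j < n) `|aw w j| ^+ 2 = \sum_(j < n) \sum_(v <- S') `|xi' j v| ^+ 2.
    rewrite exchange_big /=; apply: eq_bigr => j _.
    rewrite (reindex _ _ (s_ j) _ uS' uW (inW j)); apply: eq_bigr => w _.
    rewrite /aw; case: ifP => _; last by rewrite normr0 expr0n.
    by rewrite normrM norm_conjC H1 mul1r.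
  have EQ : \sum_(w <- W) \sum_(i < n) `|bw w i| ^+ 2 = \sum_(i < n) \sum_(u <- S') `|eta' i u| ^+ 2.
    rewrite exchange_big /=; apply: eq_bigr => i _.
    rewrite (reindex _ _ (s_ i) _ uS' uW (inW i)); apply: eq_bigr => w _.
    rewrite /bw; case: ifP => _; last by rewrite normr0 expr0n.
    by rewrite normrM H1 mul1r.
  rewrite -EP -EQ; apply: CSC; first by rewrite sqr_ge0.
    by move=> w; split; apply: sumr_ge0 => k _; rewrite exprn_ge0.
  move=> w; have := idx_bound A d S HA uS (aw w) (bw w). by [].
have H := Hc n X d HX S uS (fun j v => if v == s_ j then xi v else 0)
   (fun i u => if u == s_ i then eta u else 0).
have E : \sum_(i < n) \sum_(j < n) \sum_(u <- S) \sum_(v <- S)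
    (if u == s_ i then eta u else 0) * tg_entry mul sigma (Mphi phi (X i j)) u v *
    (if v == s_ j then xi v else 0)
  = \sum_(s <- S) \sum_(t <- S) eta s * schur_mult (K_of mul inv phi) A s t * xi t.
  rewrite [RHS]sum_ord; under [RHS]eq_bigr => i _ do rewrite sum_ord.
  apply: eq_bigr => i _; apply: eq_bigr => j _.
  transitivity (\sum_(u <- S) \sum_(v <- S) (if u == s_ i then (if v == s_ j then
     eta u * tg_entry mul sigma (Mphi phi (X i j)) u v * xi v else 0) else 0)).
    by apply: eq_bigr => u' _; apply: eq_bigr => v _; do 2 case: eqP => _; rewrite ?mul0r ?mulr0.
  rewrite sum_pick2 // L0 tgX /schur_mult.
  have -> : (s_ i == mul (g i j) (s_ j)) = true by rewrite /g -mulA mulVg mulg1 eqxx.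
  by rewrite -(mulrA (A _ _)) (mulrC (_^*)) uu mulr1.
have EN (f : G -> C) : \sum_(j < n) \sum_(v <- S) `|(if v == s_ j then f v else 0)| ^+ 2
    = \sum_(t <- S) `|f t| ^+ 2.
  rewrite [RHS]sum_ord; apply: eq_bigr => j _.
  transitivity (\sum_(v <- S) (if v == s_ j then `|f v| ^+ 2 else 0)).
    by apply: eq_bigr => v _; case: eqP => _; rewrite ?normr0 ?expr0n.
  by rewrite sum_pick // sS.
by rewrite E !EN in H.
Qed.


Lemma schur_cb (sigma : G -> G -> C) phi c :
  schur_bound (K_of mul inv phi) c -> cb_bound mul sigma phi c.
Proof.
move=> hs; split; first by case: hs.
move=> n X d H.
have := @partA R G _ c hs n _ d H.
have -> : (fun i j : 'I_n => tg_entry mul sigma (Mphi phi (X i j))) =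
  (fun i j s t => K_of mul inv phi s t * tg_entry mul sigma (X i j) s t).
  by apply: funext => i; apply: funext => j; apply: funext => s; apply: funext => t; rewrite L0.
by [].
Qed.

Lemma cb_schur_eq (sigma : G -> G -> C) phi : is_norm_cocycle mul e sigma ->
  cb_bound mul sigma phi = schur_bound (K_of mul inv phi).
Proof.
move=> Hs; apply: funext => c; apply: propext; split; first exact: partB.
exact: schur_cb.
Qed.

Lemma M0A_schur (sigma : G -> G -> C) phi : is_norm_cocycle mul e sigma ->
  M0A mul sigma phi <-> is_schur_multiplier (K_of mul inv phi).
Proof.
move=> Hs; split.
  case=> _ [c hc]; rewrite /is_schur_multiplier.
  exists c; exact: (partB _ _ _ Hs hc).
case=> c hs; split; last first.
  by exists c; apply: schur_cb.
exists c => x d hb.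
have -> : tg_entry mul sigma (Mphi phi x) = schur_mult (K_of mul inv phi) (tg_entry mul sigma x).
  by apply: funext => s; apply: funext => t; rewrite L0.
by case: hs => _; apply.
Qed.

Lemma triv_norm : is_norm_cocycle mul e (@trivial_cocycle R G).
Proof. by split => *; rewrite /trivial_cocycle ?normr1 ?mulr1. Qed.

End Grp.

Theorem proposition4p3 (R : realType) (G : eqType) (mul : G -> G -> G)
    (inv : G -> G) (e : G) (HG : is_group mul inv e)
    (sigma : G -> G -> R[i]) (Hsigma : is_norm_cocycle mul e sigma)
    (phi : G -> R[i]) :
  (M0A mul sigma phi <-> M0A mul (@trivial_cocycle R G) phi) /\
  (M0A mul sigma phi <-> is_schur_multiplier (K_of mul inv phi)) /\
  (M0A mul sigma phi ->
     cb_norm mul sigma phi = cb_norm mul (@trivial_cocycle R G) phi /\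
     cb_norm mul sigma phi = schur_norm (K_of mul inv phi)).
Proof.
have T : is_norm_cocycle mul e (@trivial_cocycle R G) by apply: triv_norm.
have h1 := @M0A_schur R G mul inv e HG sigma phi Hsigma.
have h2 := @M0A_schur R G mul inv e HG _ phi T.
have e1 := @cb_schur_eq R G mul inv e HG sigma phi Hsigma.
have e2 := @cb_schur_eq R G mul inv e HG _ phi T.
split; first by rewrite h1 h2.
split => //.
by move=> _; rewrite /cb_norm /schur_norm e1 e2.
Qed.
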